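(* Consider the two-user two-hop MAC with $n$ relays as in the context. Then (i) $\bigcup_{\mathbf B\text{ feasible},\,\mathbf B\mathbf h_1\neq 0}\mathcal R^{out}_1(\mathbf B)=\bigcup_{\theta\in[\alpha,\beta]}\mathcal R(\theta)$, i.e. it suffices to take $\theta\in[\alpha,\beta]$; and (ii) if $\arccos(\hat{\mathbf h}_{01}^T\hat{\mathbf h}_{02})\le\pi/4$, then $\bigcup_{\theta\in[\alpha,\beta]}\mathcal R(\theta)$ is a convex set (so it equals its convex hull).
   Context: Two sources $S_1,S_2$ with Gaussian inputs of powers $P_{S_1},P_{S_2}>0$, $n$ relays, one destination. Relay $k$ receives $y_k=h_{S_1,k}x_{S_1}+h_{S_2,k}x_{S_2}+z_k$ and sends $\beta_k y_k$; the destination receives $y_D=\mathbf h_1^T\mathbf B\mathbf h_{01}x_{S_1}+\mathbf h_1^T\mathbf B\mathbf h_{02}x_{S_2}+\mathbf h_1^T\mathbf B\mathbf z_1+z_D$, where $\mathbf h_{0i}=(h_{S_i,k})_k\in\mathbb R^n$, $\mathbf h_1=(h_{k,D})_k\in\mathbb R^n$ have positive entries, $\mathbf B=\mathrm{diag}(\beta_1,\dots,\beta_n)$ with real gains, and noises are i.i.d. $\mathcal N(0,1)$. $\mathbf B$ is feasible if $|\beta_k|\le\beta_k^{Up}:=\sqrt{P_k^{Up}/(1+h_{S_1,k}^2P_{S_1}+h_{S_2,k}^2P_{S_2})}$ for all $k$. Let $\mathcal C(x)=\frac12\log_2(1+x)$ and $\mathbf A=P_{S_1}\mathbf h_{01}\mathbf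 h_{01}^T+P_{S_2}\mathbf h_{02}\mathbf h_{02}^T$. For $\mathbf B$ with $\mathbf B\mathbf h_1\ne0$, $\mathcal R^{out}_1(\mathbf B)$ is the set of $(R_1,R_2)\ge0$ with $R_1\le\mathcal C\big((\mathbf h_1^T\mathbf B\mathbf h_{01})^2P_{S_1}/\mathbf h_1^T\mathbf B^2\mathbf h_1\big)$, $R_2\le\mathcal C\big((\mathbf h_1^T\mathbf B\mathbf h_{02})^2P_{S_2}/\mathbf h_1^T\mathbf B^2\mathbf h_1\big)$, $R_1+R_2\le\mathcal C\big(\mathbf h_1^T\mathbf B\mathbf A\mathbf B\mathbf h_1/\mathbf h_1^T\mathbf B^2\mathbf h_1\big)$. Let $\hat{\mathbf h}_{0i}=\mathbf h_{0i}/\|\mathbf h_{0i}\|$ and $P_i=\|\mathbf h_{0i}\|^2P_{S_i}$. Fix orthonormal $\mathbf u_1,\mathbf u_2\in\mathbb R^n$ and angles $0\le\alpha\le\beta\le\pi/2$ with $\hat{\mathbf h}_{01}=\cos\alpha\,\mathbf u_1+\sin\alpha\,\mathbf u_2$, $\hat{\mathbf h}_{02}=\cos\beta\,\mathbf u_1+\sin\beta\,\mathbf u_2$. For $\theta\in\mathbb R$ let $\phi_1(\theta)=P_1\cos^2(\theta-\alpha)$, $\phi_2(\theta)=P_2\cos^2(\theta-\beta)$, $\phi=\phi_1+\phi_2$, and $\mathcal R(\theta)=\{(R_1,R_2)\ge0:R_1\le\mathcal C(\phi_1(\theta)),R_2\le\mathcal C(\phi_2(\theta)),R_1+R_2\le\mathcal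 C(\phi(\theta))\}$. *)

(* Defs.v *)
From HB Require Import structures.
From mathcomp Require Import all_boot all_order all_algebra.
From mathcomp Require Import all_classical all_reals all_analysis.
Set Implicit Arguments. Unset Strict Implicit. Unset Printing Implicit Defensive.
Import Order.TTheory GRing.Theory Num.Theory.
Local Open Scope ring_scope.
Local Open Scope classical_set_scope.

Definition capC {R : realType} (x : R) : R := ln (1 + x) / (2 * ln 2).

Definition region3 {R : realType} (a b c : R) : set (R * R) :=
  [set p | 0 <= p.1 /\ 0 <= p.2 /\ p.1 <= capC a /\ p.2 <= capC b
           /\ p.1 + p.2 <= capC c].

Definition dotv {R : realType} {n : nat} (u v : 'cV[R]_n) : R := (u^T *m v) 0 0.
Definition normv {R : realType} {n : nat} (u : 'cV[R]_n) : R := Num.sqrt (dotv u u).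

Definition Amx {R : realType} {n : nat} (PS1 PS2 : R) (h01 h02 : 'cV[R]_n) : 'M[R]_n :=
  PS1 *: (h01 *m h01^T) + PS2 *: (h02 *m h02^T).

Definition Rout1 {R : realType} {n : nat} (PS1 PS2 : R) (h01 h02 h1 : 'cV[R]_n)
    (b : 'rV[R]_n) : set (R * R) :=
  let B := diag_mx b in
  let den := (h1^T *m B *m B *m h1) 0 0 in
  region3 (((h1^T *m B *m h01) 0 0) ^+ 2 * PS1 / den)
          (((h1^T *m B *m h02) 0 0) ^+ 2 * PS2 / den)
          ((h1^T *m B *m Amx PS1 PS2 h01 h02 *m B *m h1) 0 0 / den).

Definition betaUp {R : realType} {n : nat} (PS1 PS2 : R) (PUp : 'I_n -> R)
    (h01 h02 : 'cV[R]_n) (k : 'I_n) : R :=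
  Num.sqrt (PUp k / (1 + (h01 k 0) ^+ 2 * PS1 + (h02 k 0) ^+ 2 * PS2)).

Definition feasible {R : realType} {n : nat} (PS1 PS2 : R) (PUp : 'I_n -> R)
    (h01 h02 : 'cV[R]_n) (b : 'rV[R]_n) : Prop :=
  forall k : 'I_n, `|b 0 k| <= betaUp PS1 PS2 PUp h01 h02 k.

Definition Rtheta {R : realType} (P1 P2 alpha beta theta : R) : set (R * R) :=
  let phi1 := P1 * cos (theta - alpha) ^+ 2 in
  let phi2 := P2 * cos (theta - beta) ^+ 2 in
  region3 phi1 phi2 (phi1 + phi2).

Definition convex2 {R : realType} (S : set (R * R)) : Prop :=
  forall x y, S x -> S y -> forall t : R, 0 <= t <= 1 ->
    S (t * x.1 + (1 - t) * y.1, t * x.2 + (1 - t) * y.2).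

(* Main.v *)
Require Import Defs.
From HB Require Import structures.
From mathcomp Require Import all_boot all_order all_algebra.
From mathcomp Require Import all_classical all_reals all_analysis.
From mathcomp Require Import ring lra.
Import Order.TTheory GRing.Theory Num.Theory.
Local Open Scope ring_scope.
Local Open Scope classical_set_scope.
Set Implicit Arguments. Unset Strict Implicit.

Section Dot.
Variables (R : realType) (n : nat).
Implicit Types u v w : 'cV[R]_n.

Lemma dotvE u v : dotv u v = \sum_i u i 0 * v i 0.
Proof. by rewrite /dotv !mxE; apply: eq_bigr => i _; rewrite mxE. Qed.

Lemma dotvC u v : dotv u v = dotv v u.
Proof. by rewrite !dotvE; apply: eq_bigr => i _; rewrite mulrC. Qed.

Lemma dotvDr u v w : dotv u (v + w) = dotv u v + dotv u w.
Proof. by rewrite /dotv mulmxDr mxE. Qed.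

Lemma dotvZr u v (a : R) : dotv u (a *: v) = a * dotv u v.
Proof. by rewrite /dotv -scalemxAr mxE. Qed.

Lemma dotvDl u v w : dotv (v + w) u = dotv v u + dotv w u.
Proof. by rewrite dotvC dotvDr !(dotvC u). Qed.

Lemma dotvZl u v (a : R) : dotv (a *: v) u = a * dotv v u.
Proof. by rewrite dotvC dotvZr dotvC. Qed.

Lemma dotvNl u v : dotv (- v) u = - dotv v u.
Proof. by rewrite -scaleN1r dotvZl mulN1r. Qed.

Lemma dotvNr u v : dotv u (- v) = - dotv u v.
Proof. by rewrite -scaleN1r dotvZr mulN1r. Qed.

Lemma dotvBl u v w : dotv (v - w) u = dotv v u - dotv w u.
Proof. by rewrite dotvDl dotvNl. Qed.

Lemma dotv_ge0 u : 0 <= dotv u u.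
Proof. rewrite dotvE; apply: sumr_ge0 => i _; by rewrite -expr2 sqr_ge0. Qed.

Lemma dotv_gt0 u : u != 0 -> 0 < dotv u u.
Proof.
move=> u0; rewrite lt_def dotv_ge0 andbT; apply/negP => /eqP.
rewrite dotvE => /eqP; rewrite psumr_eq0 => [/allP H|i _]; last by rewrite -expr2 sqr_ge0.
move/negP: u0; apply; apply/eqP/matrixP => i j; rewrite (ord1 j) mxE.
have := H i (mem_index_enum i); rewrite implyTb mulf_eq0 orbb => /eqP //.
Qed.

Lemma bessel w u1 u2 : dotv u1 u1 = 1 -> dotv u2 u2 = 1 -> dotv u1 u2 = 0 ->
  dotv w u1 ^+ 2 + dotv w u2 ^+ 2 <= dotv w w.
Proof.
move=> h11 h22 h12.
have := dotv_ge0 (w - dotv w u1 *: u1 - dotv w u2 *: u2).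
rewrite !(dotvBl, dotvDr, dotvZr, dotvZl, dotvNl, dotvNr).
rewrite !(dotvC u1 w) !(dotvC u2 w) (dotvC u2 u1) h11 h22 h12.
set a := dotv w u1; set b := dotv w u2.
move=> H; nra.
Qed.

Lemma trW (b : 'rV[R]_n) (h1 : 'cV[R]_n) : h1^T *m diag_mx b = (diag_mx b *m h1)^T.
Proof. by rewrite trmx_mul tr_diag_mx. Qed.

Lemma rout_num (b : 'rV[R]_n) (h1 v : 'cV[R]_n) :
  (h1^T *m diag_mx b *m v) 0 0 = dotv (diag_mx b *m h1) v.
Proof. by rewrite trW. Qed.

Lemma rout_den (b : 'rV[R]_n) (h1 : 'cV[R]_n) :
  (h1^T *m diag_mx b *m diag_mx b *m h1) 0 0 = dotv (diag_mx b *m h1) (diag_mx b *m h1).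
Proof. by rewrite -mulmxA trW. Qed.

Lemma mx11_mul (A : 'M[R]_(1, n)) (B : 'M[R]_(n, 1)) (C : 'M[R]_(1,n)) (D : 'M[R]_(n,1)) :
  ((A *m B) *m (C *m D)) 0 0 = (A *m B) 0 0 * (C *m D) 0 0.
Proof. by rewrite [in LHS]mxE big_ord1. Qed.

Lemma entry_lin (a b : R) (M N : 'M[R]_1) :
  (a *: M + b *: N) 0 0 = a * M 0 0 + b * N 0 0.
Proof. by rewrite !mxE. Qed.

Lemma rout_sum (b : 'rV[R]_n) (h1 h01 h02 : 'cV[R]_n) (PS1 PS2 : R) :
  (h1^T *m diag_mx b *m Amx PS1 PS2 h01 h02 *m diag_mx b *m h1) 0 0
  = PS1 * dotv (diag_mx b *m h1) h01 ^+ 2 + PS2 * dotv (diag_mx b *m h1) h02 ^+ 2.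
Proof.
rewrite -mulmxA trW; set W := diag_mx b *m h1.
rewrite /Amx mulmxDr mulmxDl -!scalemxAr -!scalemxAl.
have M (v : 'cV[R]_n) : W^T *m (v *m v^T) *m W = (W^T *m v) *m (v^T *m W) by rewrite !mulmxA.
rewrite entry_lin !M !mx11_mul.
have E (v : 'cV[R]_n) : (v^T *m W) 0 0 = dotv W v by rewrite dotvC.
by rewrite !E -!/(dotv _ _) !expr2.
Qed.
End Dot.

Section Trig.
Variable R : realType.

Lemma D_negcos : 'D_1 (- (@cos R)) = sin.
Proof. apply/funext => z; rewrite (@derive_val _ _ _ _ _ _ _ (is_deriveN (is_derive_cos z))); exact: opprK. Qed.

Lemma cos_concave_le (x y t : R) : 0 <= x -> x <= y -> y <= pi / 2 -> 0 <= t -> t <= 1 ->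
  t * cos x + (1 - t) * cos y <= cos (t * x + (1 - t) * y).
Proof.
move=> x0 xy ypi t0 t1.
have H : (- (@cos R)) (conv (Itv01 t0 t1) (x : R^o) (y : R^o)) <= conv (Itv01 t0 t1) ((- (@cos R)) x : R^o) ((- (@cos R)) y : R^o).
  apply: second_derivative_convex => //.
  - move=> z /andP[xz zy]; rewrite D_negcos (@derive_val _ _ _ _ _ _ _ (is_derive_sin z)); apply: cos_ge0_pihalf.
    apply/andP; split; first by apply: le_trans (ltW (le_lt_trans x0 xz)); rewrite oppr_le0 divr_ge0 ?pi_ge0.
    exact: ltW (lt_le_trans zy ypi).
  - apply: cvg_at_left_filter; apply/differentiable_continuous/derivable1_diffP; apply: ex_derive; exact: is_deriveN.
  - apply: cvg_at_right_filter; apply/differentiable_continuous/derivable1_diffP; apply: ex_derive; exact: is_deriveN.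
  - move=> z _; rewrite D_negcos; exact: ex_derive.
move: H; rewrite !convRE /= !fctE mulrN mulrN -opprD lerN2; exact.
Qed.

Lemma cos_concave (x y t : R) : 0 <= x <= pi / 2 -> 0 <= y <= pi / 2 -> 0 <= t <= 1 ->
  t * cos x + (1 - t) * cos y <= cos (t * x + (1 - t) * y).
Proof.
move=> /andP[x0 x1] /andP[y0 y1] /andP[t0 t1].
have [xy|yx] := leP x y; first exact: cos_concave_le.
have := @cos_concave_le y x (1 - t) y0 (ltW yx) x1 _ _.
rewrite subr_ge0 t1 gerBl t0 subKr => /(_ isT isT).
by rewrite addrC (addrC ((1 - t) * y)).
Qed.

Lemma cos2E (a : R) : cos a ^+ 2 = (cos (a *+ 2) + 1) / 2.
Proof. by rewrite cos_mulr2n subrK -mulr_natr mulfK // pnatr_eq0. Qed.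

Lemma cos2_concave (a b t : R) : 0 <= a <= pi / 4 -> 0 <= b <= pi / 4 -> 0 <= t <= 1 ->
  t * cos a ^+ 2 + (1 - t) * cos b ^+ 2 <= cos (t * a + (1 - t) * b) ^+ 2.
Proof.
move=> /andP[a0 a1] /andP[b0 b1] ht.
have pi0 := pi_ge0 R.
have h2 : (pi : R) / 2 = pi / 4 + pi / 4 by field.
have H : t * cos (a *+ 2) + (1 - t) * cos (b *+ 2) <= cos (t * (a *+ 2) + (1 - t) * (b *+ 2)).
  apply: cos_concave => //.
  - by rewrite mulr2n h2 addr_ge0 ?lerD.
  - by rewrite mulr2n h2 addr_ge0 ?lerD.
rewrite !cos2E.
have -> : (t * a + (1 - t) * b) *+ 2 = t * (a *+ 2) + (1 - t) * (b *+ 2).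
  by rewrite !mulr2n; ring.
lra.
Qed.
End Trig.

Section Cap.
Variable R : realType.

Lemma ln2_gt0 : 0 < ln (2 : R).
Proof. by rewrite ln_gt0 // ltr1n. Qed.

Lemma capC_ge0 (u : R) : 0 <= u -> 0 <= capC u.
Proof.
move=> u0; rewrite /capC divr_ge0 ?mulr_ge0 ?ln_ge0 ?ler0n ?(ltW ln2_gt0) //.
  by rewrite lerDl.
by rewrite ler1n.
Qed.

Lemma capC_mono (u v : R) : 0 <= u -> u <= v -> capC u <= capC v.
Proof.
move=> u0 uv; rewrite /capC ler_pM2r ?invr_gt0 ?mulr_gt0 ?ltr0n ?ln2_gt0 //.
rewrite ler_ln ?posrE ?lerD2l //; lra.
Qed.

Lemma capC_concave (u v w t : R) : 0 <= u -> 0 <= v -> 0 <= t <= 1 ->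
  t * u + (1 - t) * v <= w -> t * capC u + (1 - t) * capC v <= capC w.
Proof.
move=> u0 v0 /andP[t0 t1] H.
have a0 : 0 < 1 + u by lra.
have b0 : 0 < 1 + v by lra.
have := @concave_ln R (Itv01 t0 t1) (1 + u) (1 + v) a0 b0.
rewrite !convRE /= => Hl.
have k0 : 0 <= (2 * ln (2 : R))^-1 by rewrite invr_ge0 mulr_ge0 ?ler0n ?(ltW ln2_gt0).
rewrite /capC !mulrA -mulrDl ler_wpM2r //.
apply: (le_trans Hl).
have e : t * (1 + u) + (1 - t) * (1 + v) = 1 + (t * u + (1 - t) * v) by ring.
have m0 : 0 <= t * u + (1 - t) * v by rewrite addr_ge0 ?mulr_ge0 ?subr_ge0.
rewrite e ler_ln ?posrE ?lerD2l //; lra.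
Qed.

Lemma region3_mono (a b c a' b' c' : R) : 0 <= a -> a <= a' -> 0 <= b -> b <= b' ->
  0 <= c -> c <= c' -> region3 a b c `<=` region3 a' b' c'.
Proof.
move=> a0 aa b0 bb c0 cc p [p1 [p2 [p3 [p4 p5]]]]; split => //; split => //.
have := capC_mono a0 aa; have := capC_mono b0 bb; have := capC_mono c0 cc.
move: p3 p4 p5; clear; lra.
Qed.
End Cap.

Section Pick.
Variable R : realType.

Lemma cos_le_mono (x y : R) : 0 <= x -> x <= y -> y <= pi -> cos y <= cos x.
Proof.
move=> x0 xy ypi; have [->//|xy'] := eqVneq x y.
have xy2 : x < y by rewrite lt_def eq_sym xy' xy.
apply: ltW; rewrite ltr_cos //.
- by rewrite in_itv /= x0 (le_trans xy ypi).
- by rewrite in_itv /= ypi (le_trans x0 xy).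
Qed.

Lemma sqr_abs (x : R) : x ^+ 2 = `|x| ^+ 2.
Proof. by rewrite -normrX ger0_norm ?sqr_ge0. Qed.

Lemma pick_theta (al be w1 w2 N : R) : 0 <= al -> al <= be -> be <= pi / 2 -> 0 < N ->
  w1 ^+ 2 + w2 ^+ 2 <= N ->
  exists2 th, al <= th <= be &
    ((cos al * w1 + sin al * w2) ^+ 2 <= N * cos (th - al) ^+ 2 /\ (cos be * w1 + sin be * w2) ^+ 2 <= N * cos (th - be) ^+ 2).
Proof.
move=> al0 albe bepi N0 wN.
have pi0 := pi_ge0 R.
set d := be - al.
have d0 : 0 <= d by rewrite subr_ge0.
have dpi2 : d <= pi / 2 by rewrite /d; lra.
have dpi : d <= pi by lra.
have cd0 : 0 <= cos d by apply: cos_ge0_pihalf; apply/andP; split => //; lra.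
have sd0 : 0 <= sin d by apply: sin_ge0_pi; rewrite d0.
set X := cos al * w1 + sin al * w2.
set Z := - sin al * w1 + cos al * w2.
set Y := cos be * w1 + sin be * w2.
set V := sin d * X - cos d * Z.
have ca := cos2Dsin2 al; have cdd := cos2Dsin2 d.
have hY : Y = cos d * X + sin d * Z.
  rewrite /Y /X /Z /d cosB sinB -[LHS]mul1r -ca; ring.
have hXZ : X ^+ 2 + Z ^+ 2 = w1 ^+ 2 + w2 ^+ 2.
  rewrite /X /Z -[RHS]mul1r -ca; ring.
have hYV : Y ^+ 2 + V ^+ 2 = X ^+ 2 + Z ^+ 2.
  rewrite hY /V -[RHS]mul1r -cdd; ring.
have hX : X = cos d * Y + sin d * V.
  rewrite hY /V -[LHS]mul1r -cdd; ring.
set sN := Num.sqrt N.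
have sN0 : 0 < sN by rewrite sqrtr_gt0.
have sN2 : sN ^+ 2 = N by rewrite sqr_sqrtr // ltW.
set y := `|Y| / sN.
have y0 : 0 <= y by rewrite divr_ge0 // ltW.
have Y2N : Y ^+ 2 <= N by have := sqr_ge0 V; lra.
have ysN : y * sN = `|Y| by rewrite /y mulfVK // gt_eqF.
have y1 : y <= 1.
  have : (y * sN) ^+ 2 <= sN ^+ 2 by rewrite ysN -sqr_abs sN2.
  rewrite exprMn => H; have : y ^+ 2 <= 1 by rewrite -(ler_pM2r (exprn_gt0 2 sN0)) mul1r.
  by have := sqr_ge0 y; nra.
have yI : y \in `[(-1), 1]%R by rewrite in_itv /= y1 andbT (le_trans _ y0) // lerN10.
set de := acos y.
have de0 : 0 <= de by apply: acos_ge0; rewrite y1 andbT (le_trans _ y0) // lerN10.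
have depi : de <= pi by apply: acos_lepi; rewrite y1 andbT (le_trans _ y0) // lerN10.
have cde : cos de = y by rewrite /de acosK.
have sde : sin de = Num.sqrt (1 - y ^+ 2) by rewrite /de sin_acos // y1 andbT (le_trans _ y0) // lerN10.
have [le_case|lt_case] := leP (be - de) al.
- exists al.
    by rewrite lexx albe.
  rewrite subrr cos0 expr1n mulr1.
  split.
    by have := sqr_ge0 Z; lra.
  have dde : d <= de by rewrite /d; lra.
  have := cos_le_mono d0 dde depi; rewrite cde => ycd.
  rewrite -opprB cosN -/d.
  have : `|Y| <= sN * cos d by rewrite -ysN mulrC ler_pM2l.
  rewrite sqr_abs => H; have Y0 := normr_ge0 Y.
  have : `|Y| ^+ 2 <= (sN * cos d) ^+ 2 by nra.
  by rewrite exprMn sN2.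
- exists (be - de).
    by apply/andP; split; [exact: ltW | rewrite gerBl].
  split; last first.
    rewrite (_ : be - de - be = - de) ?cosN ?cde; last by ring.
    by rewrite sqr_abs -ysN exprMn sN2 mulrC.
  rewrite (_ : be - de - al = d - de); last by rewrite /d; ring.
  rewrite cosB cde sde.
  set s := Num.sqrt (1 - y ^+ 2).
  have s0 : 0 <= s by apply: sqrtr_ge0.
  have s2 : s ^+ 2 = 1 - y ^+ 2 by rewrite sqr_sqrtr // subr_ge0 expr_le1.
  have V2 : V ^+ 2 <= (sN * s) ^+ 2.
    rewrite exprMn s2 sN2 mulrBr mulr1 -sN2 -exprMn (mulrC sN) ysN -sqr_abs; lra.
  have absV : `|V| <= sN * s.
    have := normr_ge0 V; have : 0 <= sN * s by rewrite mulr_ge0 // ltW.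
    rewrite sqr_abs in V2; nra.
  have absX : `|X| <= cos d * `|Y| + sin d * `|V|.
    rewrite hX; apply: le_trans (ler_normD _ _) _.
    by rewrite !normrM (ger0_norm cd0) (ger0_norm sd0).
  have T : `|X| <= sN * (cos d * y + sin d * s).
    rewrite mulrDr mulrCA (mulrC sN y) ysN mulrCA.
    apply: le_trans absX _; rewrite lerD2l ler_wpM2l //.
  rewrite sqr_abs; have := normr_ge0 X; rewrite -sN2 -exprMn; nra.
Qed.
End Pick.

Section Extra.
Variables (R : realType) (n : nat).

Lemma dot_comb (u1 u2 : 'cV[R]_n) (a b c e : R) :
  dotv u1 u1 = 1 -> dotv u2 u2 = 1 -> dotv u1 u2 = 0 ->
  dotv (a *: u1 + b *: u2) (c *: u1 + e *: u2) = a * c + b * e.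
Proof.
move=> h11 h22 h12.
rewrite !(dotvDl, dotvDr, dotvZl, dotvZr) (dotvC u2 u1) h11 h22 h12; ring.
Qed.

Lemma ratio_le (K X N c : R) : 0 <= K -> 0 < N -> X ^+ 2 <= N * c -> K * X ^+ 2 / N <= K * c.
Proof.
move=> K0 N0 H; rewrite -mulrA ler_wpM2l // ler_pdivrMr // mulrC //.
Qed.

Lemma comb_le (t p q P Q : R) : 0 <= t <= 1 -> p <= P -> q <= Q -> t * p + (1 - t) * q <= t * P + (1 - t) * Q.
Proof. move=> /andP[t0 t1] pP qQ; nra. Qed.

Lemma phi1_conc (P a b t x y : R) : 0 <= P -> b - a <= pi / 4 -> a <= x <= b -> a <= y <= b -> 0 <= t <= 1 ->
  t * (P * cos (x - a) ^+ 2) + (1 - t) * (P * cos (y - a) ^+ 2) <= P * cos (t * x + (1 - t) * y - a) ^+ 2.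
Proof.
move=> P0 d /andP[x0 x1] /andP[y0 y1] ht.
have H : t * cos (x - a) ^+ 2 + (1 - t) * cos (y - a) ^+ 2 <= cos (t * (x - a) + (1 - t) * (y - a)) ^+ 2.
  apply: cos2_concave => //; apply/andP; split; lra.
rewrite (_ : t * (x - a) + (1 - t) * (y - a) = t * x + (1 - t) * y - a) in H; last by ring.
have e : t * (P * cos (x - a) ^+ 2) + (1 - t) * (P * cos (y - a) ^+ 2) =
   P * (t * cos (x - a) ^+ 2 + (1 - t) * cos (y - a) ^+ 2) by ring.
by rewrite e ler_wpM2l.
Qed.

Lemma phi2_conc (P a b t x y : R) : 0 <= P -> b - a <= pi / 4 -> a <= x <= b -> a <= y <= b -> 0 <= t <= 1 ->
  t * (P * cos (x - b) ^+ 2) + (1 - t) * (P * cos (y - b) ^+ 2) <= P * cos (t * x + (1 - t) * y - b) ^+ 2.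
Proof.
move=> P0 d /andP[x0 x1] /andP[y0 y1] ht.
have H : t * cos (b - x) ^+ 2 + (1 - t) * cos (b - y) ^+ 2 <= cos (t * (b - x) + (1 - t) * (b - y)) ^+ 2.
  apply: cos2_concave => //; apply/andP; split; lra.
rewrite (_ : t * (b - x) + (1 - t) * (b - y) = b - (t * x + (1 - t) * y)) in H; last by ring.
rewrite -!(opprB b) !cosN in H *.
have e : t * (P * cos (b - x) ^+ 2) + (1 - t) * (P * cos (b - y) ^+ 2) =
   P * (t * cos (b - x) ^+ 2 + (1 - t) * cos (b - y) ^+ 2) by ring.
by rewrite e ler_wpM2l.
Qed.
End Extra.

Section Conv.
Variable R : realType.

Lemma convex_part (P1 P2 al be : R) : 0 <= P1 -> 0 <= P2 -> be - al <= pi / 4 ->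
  convex2 (\bigcup_(theta in `[al, be]) Rtheta P1 P2 al be theta).
Proof.
move=> P10 P20 d x y [tx Ix Hx] [ty Iy Hy] t ht.
move: Ix Iy; rewrite /= !in_itv /= => Ix Iy.
have tI : al <= t * tx + (1 - t) * ty <= be.
  move: ht Ix Iy => /andP[t0 t1] /andP[a1 a2] /andP[b1 b2]; apply/andP; split; nra.
exists (t * tx + (1 - t) * ty); first by rewrite /= in_itv /=.
move: Hx Hy; rewrite /Rtheta /region3 /= => [[x1 [x2 [x3 [x4 x5]]]] [y1 [y2 [y3 [y4 y5]]]]].
have [t0 t1] : 0 <= t /\ 0 <= 1 - t by move: ht => /andP[t0 t1]; split; lra.
have c1 := phi1_conc P10 d Ix Iy ht.
have c2 := phi2_conc P20 d Ix Iy ht.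
have g1 z : 0 <= P1 * cos (z - al) ^+ 2 by rewrite mulr_ge0 ?sqr_ge0.
have g2 z : 0 <= P2 * cos (z - be) ^+ 2 by rewrite mulr_ge0 ?sqr_ge0.
split; first by rewrite addr_ge0 ?mulr_ge0.
split; first by rewrite addr_ge0 ?mulr_ge0.
split.
  apply: le_trans (comb_le ht x3 y3) _; exact: capC_concave.
split.
  apply: le_trans (comb_le ht x4 y4) _; exact: capC_concave.
have e : t * x.1 + (1 - t) * y.1 + (t * x.2 + (1 - t) * y.2) = t * (x.1 + x.2) + (1 - t) * (y.1 + y.2) by ring.
rewrite e; apply: le_trans (comb_le ht x5 y5) _; apply: capC_concave; rewrite ?addr_ge0 //.
lra.
Qed.

End Conv.

Section Part1.
Variables (R : realType) (n : nat).

Lemma part1 (PS1 PS2 : R) (PUp : 'I_n -> R)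
  (h01 h02 h1 u1 u2 : 'cV[R]_n) (alpha beta : R) :
  0 < PS1 -> 0 < PS2 ->
  (forall k, 0 < PUp k) ->
  (forall k, 0 < h01 k 0) -> (forall k, 0 < h02 k 0) -> (forall k, 0 < h1 k 0) ->
  dotv u1 u1 = 1 -> dotv u2 u2 = 1 -> dotv u1 u2 = 0 ->
  0 <= alpha -> alpha <= beta -> beta <= pi / 2 ->
  (normv h01)^-1 *: h01 = cos alpha *: u1 + sin alpha *: u2 ->
  (normv h02)^-1 *: h02 = cos beta *: u1 + sin beta *: u2 ->
  (\bigcup_(b in [set b : 'rV[R]_n | feasible PS1 PS2 PUp h01 h02 b
                                   /\ diag_mx b *m h1 != 0])
      Rout1 PS1 PS2 h01 h02 h1 b
   = \bigcup_(theta in `[alpha, beta]) Rtheta (normv h01 ^+ 2 * PS1) (normv h02 ^+ 2 * PS2) alpha beta theta).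
Proof.
move=> PS10 PS20 PUp0 h010 h020 h10 u11 u22 u12 al0 albe bepi e1 e2.
have npos (h : 'cV[R]_n) (g : R) : (normv h)^-1 *: h = cos g *: u1 + sin g *: u2 -> 0 < normv h.
  move=> e; rewrite /normv sqrtr_gt0 dotv_gt0 //; apply/eqP => h0.
  have := congr1 (fun v => dotv v v) e; rewrite h0 scaler0 /=.
  rewrite dot_comb // /dotv trmx0 mul0mx mxE -!expr2 cos2Dsin2 => /eqP.
  by rewrite eq_sym oner_eq0.
have n1 := npos _ _ e1; have n2 := npos _ _ e2.
have hh (h : 'cV[R]_n) (g : R) : 0 < normv h -> (normv h)^-1 *: h = cos g *: u1 + sin g *: u2 ->
    forall W, dotv W h = normv h * (cos g * dotv W u1 + sin g * dotv W u2).
  move=> hn e W; rewrite {1}(_ : h = normv h *: (cos g *: u1 + sin g *: u2)); last first.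
    by rewrite -e scalerA mulfV ?gt_eqF // scale1r.
  by rewrite dotvZr dotvDr !dotvZr.
have d1 := hh _ _ n1 e1; have d2 := hh _ _ n2 e2.
apply/seteqP; split => p /=.
- move=> [b /= [fb Wb]]; rewrite /Rout1 rout_num rout_num rout_den rout_sum.
  set W := diag_mx b *m h1; rewrite !d1 !d2.
  set w1 := dotv W u1; set w2 := dotv W u2.
  have N0 : 0 < dotv W W := dotv_gt0 Wb.
  have bes := bessel W u11 u22 u12.
  have [th Ith [H1 H2]] := pick_theta al0 albe bepi N0 bes.
  move=> Hp; exists th; first by rewrite /= in_itv /=.
  set X := cos alpha * w1 + sin alpha * w2 in H1 Hp *.
  set Y := cos beta * w1 + sin beta * w2 in H2 Hp *.
  set N := dotv W W in N0 H1 H2 Hp *.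
  have K1 : 0 <= normv h01 ^+ 2 * PS1 by rewrite mulr_ge0 ?sqr_ge0 ?ltW.
  have K2 : 0 <= normv h02 ^+ 2 * PS2 by rewrite mulr_ge0 ?sqr_ge0 ?ltW.
  have E1 : (normv h01 * X) ^+ 2 * PS1 / N = normv h01 ^+ 2 * PS1 * X ^+ 2 / N.
    by rewrite exprMn; congr (_ / _); ring.
  have E2 : (normv h02 * Y) ^+ 2 * PS2 / N = normv h02 ^+ 2 * PS2 * Y ^+ 2 / N.
    by rewrite exprMn; congr (_ / _); ring.
  have E3 : (PS1 * (normv h01 * X) ^+ 2 + PS2 * (normv h02 * Y) ^+ 2) / N =
     normv h01 ^+ 2 * PS1 * X ^+ 2 / N + normv h02 ^+ 2 * PS2 * Y ^+ 2 / N.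
    by rewrite !exprMn -mulrDl; congr (_ / _); ring.
  have r1 := ratio_le K1 N0 H1; have r2 := ratio_le K2 N0 H2.
  have q1 : 0 <= normv h01 ^+ 2 * PS1 * X ^+ 2 / N.
    by apply: divr_ge0; [apply: mulr_ge0 => //; exact: sqr_ge0 | exact: ltW N0].
  have q2 : 0 <= normv h02 ^+ 2 * PS2 * Y ^+ 2 / N.
    by apply: divr_ge0; [apply: mulr_ge0 => //; exact: sqr_ge0 | exact: ltW N0].
  move: Hp; rewrite E1 E2 E3 /Rtheta => Hp.
  apply: (region3_mono _ _ _ _ _ _ Hp) => //.
  - by rewrite addr_ge0.
  - exact: lerD.
move=> [th /= Ith Hp]; rewrite in_itv /= in Ith.
set g := cos th *: u1 + sin th *: u2.
have gg : dotv g g = 1 by rewrite dot_comb // -!expr2 cos2Dsin2.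
have gu1 : dotv g u1 = cos th by rewrite dotvDl !dotvZl u11 (dotvC u2 u1) u12; ring.
have gu2 : dotv g u2 = sin th by rewrite dotvDl !dotvZl u22 u12; ring.
set bu := betaUp PS1 PS2 PUp h01 h02.
have bu0 k : 0 < bu k.
  rewrite /bu /betaUp sqrtr_gt0 divr_gt0 //.
  have := sqr_ge0 (h01 k 0); have := sqr_ge0 (h02 k 0) => s1 s2.
  have := mulr_ge0 s1 (ltW PS20); have := mulr_ge0 s2 (ltW PS10); lra.
set q := fun k => `|g k 0| / (h1 k 0 * bu k).
have q0 k : 0 <= q k by rewrite /q divr_ge0 // mulr_ge0 // ltW.
set S := \sum_k q k.
have S0 : 0 <= S by rewrite /S sumr_ge0.
set c := (1 + S)^-1.
have c0 : 0 < c by rewrite /c invr_gt0; lra.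
have cS : c * (1 + S) = 1 by rewrite /c mulVf //; apply/eqP => /eqP; lra.
set b := \row_k (c * g k 0 / h1 k 0).
have Wc : diag_mx b *m h1 = c *: g.
  apply/matrixP => i j; rewrite (ord1 j) mul_diag_mx !mxE mulfVK // gt_eqF //.
exists b.
  split.
    move=> k; rewrite /b mxE -/(bu k).
    have qk : q k <= S by rewrite /S (bigD1 k) //= lerDl sumr_ge0.
    have e : `|c * g k 0 / h1 k 0| = c * q k * bu k.
      rewrite /q !normrM (gtr0_norm c0) normfV (gtr0_norm (h10 k)).
      field; apply/andP; split; apply: lt0r_neq0 => //.
    have cq : c * q k <= 1 by rewrite -cS ler_wpM2l ?(ltW c0) //; lra.
    rewrite e; have := bu0 k; nra.
  rewrite Wc; apply/eqP => h0; have := congr1 (fun v => dotv v v) h0.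
  rewrite /= dotvZl dotvZr gg /dotv trmx0 mul0mx mxE mulr1 => /eqP.
  by rewrite mulf_eq0 orbb gt_eqF.
have E (x y z x' y' z' : R) : x = x' -> y = y' -> z = z' -> region3 x' y' z' p -> region3 x y z p.
  by move=> -> -> ->.
rewrite /Rout1 rout_num rout_num rout_den rout_sum Wc !d1 !d2 !dotvZl !dotvZr gg gu1 gu2.
move: Hp; rewrite /Rtheta; apply: E.
- rewrite cosB; field; exact: lt0r_neq0.
- rewrite cosB; field; exact: lt0r_neq0.
- rewrite !cosB; field; exact: lt0r_neq0.
Qed.
End Part1.

Theorem theorem5 (R : realType) (n : nat) (PS1 PS2 : R) (PUp : 'I_n -> R)
  (h01 h02 h1 u1 u2 : 'cV[R]_n) (alpha beta : R) :
  0 < PS1 -> 0 < PS2 ->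
  (forall k, 0 < PUp k) ->
  (forall k, 0 < h01 k 0) -> (forall k, 0 < h02 k 0) -> (forall k, 0 < h1 k 0) ->
  dotv u1 u1 = 1 -> dotv u2 u2 = 1 -> dotv u1 u2 = 0 ->
  0 <= alpha -> alpha <= beta -> beta <= pi / 2 ->
  (normv h01)^-1 *: h01 = cos alpha *: u1 + sin alpha *: u2 ->
  (normv h02)^-1 *: h02 = cos beta *: u1 + sin beta *: u2 ->
  let P1 := normv h01 ^+ 2 * PS1 in
  let P2 := normv h02 ^+ 2 * PS2 in
  (\bigcup_(b in [set b : 'rV[R]_n | feasible PS1 PS2 PUp h01 h02 b
                                   /\ diag_mx b *m h1 != 0])
      Rout1 PS1 PS2 h01 h02 h1 b
   = \bigcup_(theta in `[alpha, beta]) Rtheta P1 P2 alpha beta theta)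
  /\
  (acos (dotv ((normv h01)^-1 *: h01) ((normv h02)^-1 *: h02)) <= pi / 4 ->
   convex2 (\bigcup_(theta in `[alpha, beta]) Rtheta P1 P2 alpha beta theta)).
Proof.
move=> PS10 PS20 PUp0 h010 h020 h10 u11 u22 u12 al0 albe bepi e1 e2 P1 P2.
split; first exact: (part1 PS10 PS20 PUp0 h010 h020 h10 u11 u22 u12 al0 albe bepi e1 e2).
move=> Hac; apply: convex_part.
- by rewrite /P1 mulr_ge0 ?sqr_ge0 // ltW.
- by rewrite /P2 mulr_ge0 ?sqr_ge0 // ltW.
move: Hac; rewrite e1 e2 dot_comb //.
rewrite (_ : cos alpha * cos beta + sin alpha * sin beta = cos (beta - alpha)); last first.
  by rewrite cosB; ring.
have pi0 := pi_ge0 R.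
rewrite cosK // in_itv /=; apply/andP; split; first by rewrite subr_ge0.
lra.
Qed.
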